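(* Let $\Lambda\subseteq\mathbb Z^D$ be a lattice that induces a lattice tiling of each of two shapes $\mathcal S$ and $\mathcal S'$, and let $\delta$ be a nonzero ternary vector. Then $(\Lambda,\mathcal S,\delta)$ defines a folding if and only if $(\Lambda,\mathcal S',\delta)$ defines a folding.
   Context: Let $D\ge 1$. A shape is a finite nonempty set $\mathcal S\subset\mathbb Z^D$ containing the origin; the origin is its distinguished center point. A lattice is a set $\Lambda=\{\sum_{j=1}^D u_jv_j : u_1,\dots,u_D\in\mathbb Z\}$ for linearly independent $v_1,\dots,v_D\in\mathbb Z^D$. $\Lambda$ induces a lattice tiling of $\mathcal S$ if the translates $\mathcal S+\lambda$, $\lambda\in\Lambda$, are pairwise disjoint and cover $\mathbb Z^D$. The translate $\mathcal S+\lambda$ is called the copy of $\mathcal S$ with center $\lambda$. For $x\in\mathbb Z^D$, $c(x)$ denotes the unique $\lambda\in\Lambda$ with $x\in\mathcal S+\lambda$. A ternary vector (direction) is a nonzero $\delta\in\{-1,0,+1\}^D$. The folded-row of $(\Lambda,\mathcal S,\delta)$ is the sequence $p_0,p_1,p_2,\dots$ defined by $p_0=0$ and $p_{k+1}=(p_k+\delta)-c(p_k+\delta)$. Equivalently, $p_{k+1}=p_k+\delta$ if $p_k+\delta\in\mathcal S$; otherwise $p_{k+1}$ is $p_k+\delta$ minus the center of the copy of $\mathcal S$ containing $p_k+\delta$. The triple $(\Lambda,\mathcal S,\delta)$ defines a folding if every element of $\mathcal S$ occurs in its folded-row. *)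

(* Defs.v *)
From HB Require Import structures.
From mathcomp Require Import all_boot all_order all_algebra.
Set Implicit Arguments. Unset Strict Implicit. Unset Printing Implicit Defensive.
Import Order.TTheory GRing.Theory Num.Theory.
Local Open Scope ring_scope.

(* A shape: a finite (given by a list) subset of Z^D containing the origin
   (hence nonempty). *)
Definition is_shape (D : nat) (S : seq 'rV[int]_D) : Prop := (0 : 'rV[int]_D) \in S.

(* A lattice is given by a D x D integer matrix B whose rows v_1..v_D are
   linearly independent; Lambda = { sum_j u_j v_j : u in Z^D } = { u *m B }. *)
Definition lin_indep_rows (D : nat) (B : 'M[int]_D) : Prop :=
  forall u : 'rV[int]_D, u *m B = 0 -> u = 0.

Definition in_lattice (D : nat) (B : 'M[int]_D) (x : 'rV[int]_D) : Prop :=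
  exists u : 'rV[int]_D, x = u *m B.

Definition in_copy (D : nat) (S : seq 'rV[int]_D) (lam x : 'rV[int]_D) : bool :=
  (x - lam) \in S.

Definition lattice_tiling (D : nat) (B : 'M[int]_D) (S : seq 'rV[int]_D) : Prop :=
  (forall x : 'rV[int]_D, exists lam, in_lattice B lam /\ in_copy S lam x) /\
  (forall lam lam' x : 'rV[int]_D, in_lattice B lam -> in_lattice B lam' ->
     lam <> lam' -> in_copy S lam x -> in_copy S lam' x -> False).

Definition ternary (D : nat) (delta : 'rV[int]_D) : Prop :=
  delta <> 0 /\ forall i : 'I_D, delta 0 i \in [:: -1; 0; 1].

(* p is the folded-row of (Lambda, S, delta): p_0 = 0 and
   p_{k+1} = (p_k + delta) - c(p_k + delta), where c(y) is the (unique, under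
   the tiling hypothesis) lam in Lambda with y in S + lam. *)
Definition is_folded_row (D : nat) (B : 'M[int]_D) (S : seq 'rV[int]_D)
    (delta : 'rV[int]_D) (p : nat -> 'rV[int]_D) : Prop :=
  p 0%N = 0 /\
  forall k : nat, exists lam, in_lattice B lam /\ in_copy S lam (p k + delta) /\
     p k.+1 = (p k + delta) - lam.

Definition defines_folding (D : nat) (B : 'M[int]_D) (S : seq 'rV[int]_D)
    (delta : 'rV[int]_D) : Prop :=
  forall p : nat -> 'rV[int]_D, is_folded_row B S delta p ->
    forall s, s \in S -> exists k : nat, p k = s.

(* Main.v *)
Require Import Defs.
From HB Require Import structures.
From mathcomp Require Import all_boot all_order all_algebra.
From Stdlib Require Import ClassicalEpsilon.
Import GRing.Theory.

Section Aux.
Local Open Scope ring_scope.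

Lemma alg1 (V : zmodType) (a d l m : V) : (a + d - l) - (m + d) = (a - m) + (- l).
Proof. by rewrite opprD !addrA (addrAC _ (-l)) (addrAC _ (-l)) (addrAC _ (-m)) addrK. Qed.
Lemma alg2 (V : zmodType) (a m s l : V) : ((a - m) - ((s - l) - m)) - l = a - s.
Proof. by rewrite opprB addrA subrK opprB addrA (addrAC _ (-s)) addrK. Qed.

Variable (D : nat) (B : 'M[int]_D).

Lemma L0 : in_lattice B 0.
Proof. by exists 0; rewrite mul0mx. Qed.
Lemma LD x y : in_lattice B x -> in_lattice B y -> in_lattice B (x + y).
Proof. by move=> [u ->] [v ->]; exists (u + v); rewrite mulmxDl. Qed.
Lemma LN x : in_lattice B x -> in_lattice B (- x).
Proof. by move=> [u ->]; exists (- u); rewrite mulNmx. Qed.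
Lemma LB x y : in_lattice B x -> in_lattice B y -> in_lattice B (x - y).
Proof. by move=> hx hy; apply: LD => //; apply: LN. Qed.

Lemma row_cong (S : seq 'rV[int]_D) delta p : is_folded_row B S delta p ->
  forall k, in_lattice B (p k - delta *+ k).
Proof.
move=> [h0 hS]; elim=> [|k IH]; first by rewrite h0 mulr0n subr0; exact: L0.
have [lam [hl [_ ->]]] := hS k.
by rewrite mulrSr alg1; apply: LD => //; apply: LN.
Qed.

Lemma row_in (S : seq 'rV[int]_D) delta p : is_shape S -> is_folded_row B S delta p ->
  forall k, p k \in S.
Proof.
move=> hsh [h0 hS] [|k]; first by rewrite h0.
by have [lam [_ [hc ->]]] := hS k.
Qed.

Lemma row_exists (S : seq 'rV[int]_D) delta : lattice_tiling B S ->
  exists p, is_folded_row B S delta p.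
Proof.
move=> [hcov _].
pose c x := proj1_sig (constructive_indefinite_description _ (hcov x)).
have hc x : in_lattice B (c x) /\ in_copy S (c x) x :=
  proj2_sig (constructive_indefinite_description _ (hcov x)).
pose f y := y + delta - c (y + delta).
exists (fun k => iter k f 0); split => // k.
by exists (c (iter k f 0 + delta)); have [h1 h2] := hc (iter k f 0 + delta).
Qed.

Lemma half (S S' : seq 'rV[int]_D) delta :
  is_shape S -> is_shape S' -> lattice_tiling B S -> lattice_tiling B S' ->
  defines_folding B S delta -> defines_folding B S' delta.
Proof.
move=> hsh hsh' hT hT' hF p' hp' s' hs'.
have [p hp] := @row_exists S delta hT.
have [lam [hl hcs]] := hT.1 s'.
have [k hk] := hF p hp _ hcs.
exists k.
have hc1 := row_cong _ _ _ hp' k.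
have hc2 := row_cong _ _ _ hp k.
rewrite hk in hc2.
have hL : in_lattice B (p' k - s').
  by rewrite -(@alg2 _ (p' k) (delta *+ k) s' lam); apply: LB => //; apply: LB.
case: (eqVneq (s' - p' k) 0) => [/eqP|hne].
  by rewrite subr_eq0 => /eqP.
exfalso; apply: (hT'.2 0 (s' - p' k) s' L0) => //.
- by rewrite -opprB; apply: LN.
- by move=> e; rewrite -e eqxx in hne.
- by rewrite /in_copy subr0.
- by rewrite /in_copy opprB addrA (addrC s') addrK; apply: (row_in _ _ _ hsh' hp').
Qed.
End Aux.

Theorem mainTheorem3 (D : nat) (hD : (1 <= D)%N) (B : 'M[int]_D)
  (S S' : seq 'rV[int]_D) (delta : 'rV[int]_D) :
  lin_indep_rows B -> is_shape S -> is_shape S' ->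
  lattice_tiling B S -> lattice_tiling B S' -> ternary delta ->
  (defines_folding B S delta <-> defines_folding B S' delta).
Proof.
move=> _ h1 h2 t1 t2 _; split; exact: half.
Qed.
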